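(* Let $\Lambda$ be a cohomology algebra of $b^+=1$ type with $2\tilde\chi(\Lambda)+3\sigma(\Lambda)\ge0$ falling into Case (1), (3) or (5) below, and let $A=aF+bB$ be a reduced class with $A\cdot A\ge0$. Then: Case (1): $h(A)<0$ iff $a>1$ and $b=0$; $h(A)=0$ iff $a\ge b=1$, or $(a,b)\in\{(1,0),(0,0)\}$. Case (3): $h(A)<0$ iff $a>1$ and $b=0$; $h(A)=0$ iff $(a,b)\in\{(1,0),(0,0)\}$. Case (5): $h(A)<0$ iff $a>1$ and $b=0$; $h(A)=0$ iff $(a,b)\in\{(1,0),(0,0)\}$. In all other cases $h(A)>0$. Moreover, in Case (2) every nonzero $A$ with $A\cdot A\ge0$ has $h(A)>0$.
   Context: Notation: $\Lambda$ a cohomology algebra (graded commutative algebra over $\mathbb{Z}$, free of finite rank in each degree, $p:\Lambda^4\cong\mathbb{Z}$ with perfect pairings); $\Gamma(x,y)=x\cdot y=p(xy)$ on $\Lambda^2$, signature $\sigma$; $I_T\subseteq\Lambda^2$ generated by products of elements of $\Lambda^1$; $\tilde b_1=b_1-\mathrm{rank}\{x\in\Lambda^1:x\Lambda^1=0\}$; $\tilde\chi=2+b_2-2\tilde b_1$. Characteristic: $c\cdot A\equiv A\cdot A\pmod2$ for all $A$. Adjunction class: characteristic $c$ with (I) $c\cdot c>\sigma$, or (II) $c\cdot c\ge2\tilde\chi+3\sigma$ and, if $I_T\ne0$, $c\cdot x\ne0$ for some $x\in I_T$. $h_c(A)=1+\frac{A\cdot A-|c\cdot A|}{2}$ for $A\ne0$,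 $h_c(0)=0$; $h(A)=\max_c h_c(A)$. $U=\begin{pmatrix}0&1\\1&0\end{pmatrix}$, $E$ the positive definite $E_8$ form. (1) $I_T=0$, $\Gamma\cong U$; basis $\{F,B\}$, $F\cdot F=B\cdot B=0$, $F\cdot B=1$; reduced: $aF+bB$, $a\ge|b|\ge0$. (2) $I_T=0$, $\Gamma\cong U\oplus(-E)$. (3) $\tilde b_1=2$, $\Gamma\cong U$; $F$ generates $I_T$, basis $\{F,B\}$, $F\cdot F=B\cdot B=0$, $F\cdot B=1$; reduced: $aF+bB$ with $a>0$, or $a=0,b\ge0$. (5) $\tilde b_1=2$, $\Gamma\cong\langle1\rangle\oplus\langle-1\rangle$; $F$ generates $I_T$, basis $\{F,B\}$, $F\cdot F=0$, $F\cdot B=B\cdot B=1$; reduced: $aF+bB$ with $a>0$, or $a=0,b\ge0$. *)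

(* Defs.v *)
From HB Require Import structures.
From mathcomp Require Import all_boot all_order all_algebra.
Set Implicit Arguments. Unset Strict Implicit. Unset Printing Implicit Defensive.
Import Order.TTheory GRing.Theory Num.Theory.
Local Open Scope ring_scope.

(* Cohomology algebras (graded commutative Z-algebras, free of finite  *)
(* rank in each degree, Lambda^0 = Z, Lambda^4 identified with Z via p, *)
(* Lambda^k = 0 for k > 4, perfect pairings).                          *)
(* Lambda^k is modelled as 'rV[int]_(b_k); b0 = b4 = 1 (Lambda^0 = Z,   *)
(* acting by scalars; Lambda^4 = Z via p).  Products of positive degree *)
(* are recorded as biadditive maps; the products Lambda^2 x Lambda^1,   *)
(* Lambda^3 x Lambda^1 are determined by graded commutativity.          *)

Definition biadditive (U V W : zmodType) (f : U -> V -> W) : Prop :=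
  (forall x x' y, f (x + x') y = f x y + f x' y) /\
  (forall x y y', f x (y + y') = f x y + f x y').

Definition zadd (U : zmodType) (g : U -> int) : Prop :=
  forall x y, g (x + y) = g x + g y.

Definition perfect (U V : zmodType) (f : U -> V -> int) : Prop :=
  (forall g : V -> int, zadd g -> exists! x : U, forall y, f x y = g y) /\
  (forall g : U -> int, zadd g -> exists! y : V, forall x, f x y = g x).

Record cohom_alg : Type := CohomAlg {
  b1 : nat; b2 : nat; b3 : nat;
  mul11 : 'rV[int]_b1 -> 'rV[int]_b1 -> 'rV[int]_b2;
  mul12 : 'rV[int]_b1 -> 'rV[int]_b2 -> 'rV[int]_b3;
  mul13 : 'rV[int]_b1 -> 'rV[int]_b3 -> int;   (* p(x y), x in L^1, y in L^3 *)
  mul22 : 'rV[int]_b2 -> 'rV[int]_b2 -> int;   (* p(x y), x, y in L^2 *)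
  mul11_bi : biadditive mul11;
  mul12_bi : biadditive mul12;
  mul13_bi : biadditive mul13;
  mul22_bi : biadditive mul22;
  mul11_anti : forall x y, mul11 x y = - mul11 y x;
  mul22_sym : forall x y, mul22 x y = mul22 y x;
  (* associativity (products L^2 L^1 = L^1 L^2, L^3 L^1 = - L^1 L^3) *)
  assoc111 : forall x y z, mul12 z (mul11 x y) = mul12 x (mul11 y z);
  assoc112 : forall x y w, mul22 (mul11 x y) w = mul13 x (mul12 y w);
  assoc121 : forall x w z, - mul13 z (mul12 x w) = mul13 x (mul12 z w);
  assoc211 : forall w x y, - mul13 y (mul12 x w) = mul22 w (mul11 x y);
  perfect13 : perfect mul13;
  perfect22 : perfect mul22
}.

Section Defs.
Variable L : cohom_alg.

Definition dot (x y : 'rV[int]_(b2 L)) : int := @mul22 L x y.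

Definition in_IT (x : 'rV[int]_(b2 L)) : Prop :=
  exists s : seq ('rV[int]_(b1 L) * 'rV[int]_(b1 L)),
    x = \sum_(p <- s) @mul11 L p.1 p.2.

Definition IT_nonzero : Prop := exists x, in_IT x /\ x != 0.
Definition IT_zero : Prop := forall x, in_IT x -> x = 0.

Definition zindep (k n : nat) (V : 'M[int]_(k, n)) : Prop :=
  forall u : 'rV[int]_k, u *m V = 0 -> u = 0.

Definition is_rank_ann1 (r : nat) : Prop :=
  (exists V : 'M[int]_(r, b1 L),
      zindep V /\ forall i y, @mul11 L (row i V) y = 0) /\
  ~ (exists V : 'M[int]_(r.+1, b1 L),
      zindep V /\ forall i y, @mul11 L (row i V) y = 0).

Definition is_bt1 (m : nat) : Prop :=
  exists r, is_rank_ann1 r /\ m = (b1 L - r)%N.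

Definition is_chit (t : int) : Prop :=
  exists m, is_bt1 m /\ t = 2 + (b2 L)%:Z - 2 * m%:Z.

Definition posdef_k (k : nat) : Prop :=
  exists V : 'M[int]_(k, b2 L),
    forall u : 'rV[int]_k, u != 0 -> 0 < dot (u *m V) (u *m V).
Definition negdef_k (k : nat) : Prop :=
  exists V : 'M[int]_(k, b2 L),
    forall u : 'rV[int]_k, u != 0 -> dot (u *m V) (u *m V) < 0.

Definition is_bplus (p : nat) : Prop := posdef_k p /\ ~ posdef_k p.+1.
Definition is_bminus (q : nat) : Prop := negdef_k q /\ ~ negdef_k q.+1.

Definition is_sigma (s : int) : Prop :=
  exists p q, is_bplus p /\ is_bminus q /\ s = p%:Z - q%:Z.

Definition bplus_one : Prop := is_bplus 1.

Definition chi_sigma_nonneg : Prop :=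
  exists s t, is_sigma s /\ is_chit t /\ 0 <= 2 * t + 3 * s.

Definition characteristic (c : 'rV[int]_(b2 L)) : Prop :=
  forall A, (dot c A = dot A A %[mod 2])%Z.

Definition adjunction_class (c : 'rV[int]_(b2 L)) : Prop :=
  characteristic c /\
  exists s t, is_sigma s /\ is_chit t /\
    (s < dot c c \/
     (2 * t + 3 * s <= dot c c /\
      (IT_nonzero -> exists x, in_IT x /\ dot c x != 0))).

Definition hc (c A : 'rV[int]_(b2 L)) : rat :=
  if A == 0 then 0 else 1 + ((dot A A - `|dot c A|)%:~R / 2).

Definition is_h (A : 'rV[int]_(b2 L)) (v : rat) : Prop :=
  (exists c, adjunction_class c /\ hc c A = v) /\
  (forall c, adjunction_class c -> hc c A <= v).

Definition basis2 (F B : 'rV[int]_(b2 L)) : Prop :=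
  forall x, exists! ab : int * int, x = ab.1 *: F + ab.2 *: B.

End Defs.

(* positive definite E8 form (Cartan matrix; Dynkin diagram: chain
   0-1-2-3-4-5-6 with node 7 attached to node 4) *)
Definition E8edge (i j : nat) : bool :=
  [|| (i == 0) && (j == 1), (i == 1) && (j == 2), (i == 2) && (j == 3),
      (i == 3) && (j == 4), (i == 4) && (j == 5), (i == 5) && (j == 6)
    | (i == 4) && (j == 7)]%N.

Definition E8entry (i j : nat) : int :=
  if i == j then 2 else if E8edge i j || E8edge j i then -1 else 0.

Definition E8 : 'M[int]_8 := \matrix_(i < 8, j < 8) E8entry i j.

(* Gram matrix of U + (-E) *)
Definition UmE8 : 'M[int]_10 :=
  \matrix_(i < 10, j < 10)
    if (i < 2)%N && (j < 2)%N then (if i == j :> nat then 0 else 1)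
    else if (2 <= i)%N && (2 <= j)%N then - E8entry (i - 2) (j - 2)
    else 0.

(* Main.v *)
Require Import Defs.
From HB Require Import structures.
From mathcomp Require Import all_boot all_order all_algebra.
From mathcomp Require Import zify ring lra.
Import Order.TTheory GRing.Theory Num.Theory.
Local Open Scope ring_scope.

Set Implicit Arguments. Unset Strict Implicit.

Section Basics.
Variable L : cohom_alg.
Notation V2 := ('rV[int]_(b2 L)).

Lemma dotDl (x x' y : V2) : dot x y + dot x' y = dot (x + x') y.
Proof. by rewrite /dot (proj1 (mul22_bi L)). Qed.
Lemma dotDr (x y y' : V2) : dot x y + dot x y' = dot x (y + y').
Proof. by rewrite /dot (proj2 (mul22_bi L)). Qed.
Lemma dotC (x y : V2) : dot x y = dot y x.
Proof. exact: mul22_sym. Qed.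
Lemma dot0l (y : V2) : dot 0 y = 0.
Proof. have := dotDl 0 0 y; rewrite addr0 => /eqP; rewrite -subr_eq0.
by rewrite addrK => /eqP. Qed.
Lemma dotNl (x y : V2) : dot (- x) y = - dot x y.
Proof. have := dotDl x (- x) y; rewrite subrr dot0l => /eqP.
by rewrite addr_eq0 => /eqP ->; rewrite opprK. Qed.
Lemma dotZl (z : int) (x y : V2) : dot (z *: x) y = z * dot x y.
Proof.
have hn : forall n : nat, dot (n%:Z *: x) y = n%:Z * dot x y.
  elim=> [|n IH]; first by rewrite scale0r dot0l mul0r.
  by rewrite intS scalerDl scale1r -dotDl IH mulrDl mul1r.
case: z => n; first exact: hn.
by rewrite NegzE scaleNr dotNl hn mulNr.
Qed.
Lemma dotZr (z : int) (x y : V2) : dot x (z *: y) = z * dot x y.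
Proof. by rewrite dotC dotZl dotC. Qed.
Lemma dot_coord (a b c d : int) (F B : V2) :
  dot (a *: F + b *: B) (c *: F + d *: B) =
  a * c * dot F F + (a * d + b * c) * dot F B + b * d * dot B B.
Proof.
rewrite -!dotDl -!dotDr !dotZl !dotZr (dotC B F); ring.
Qed.
Lemma dot_lin (a b : int) (F B y : V2) :
  dot (a *: F + b *: B) y = a * dot F y + b * dot B y.
Proof. by rewrite -dotDl !dotZl. Qed.

Lemma basis_zero (F B : V2) (a b : int) : basis2 F B ->
  a *: F + b *: B = 0 -> a = 0 /\ b = 0.
Proof.
move=> hB e; have [[p q] [_ u]] := hB 0.
have h1 := u (a, b) (esym e).
have h2 := u (0, 0); rewrite /= !scale0r addr0 in h2.
by move: (h2 erefl); rewrite h1 => -[-> ->].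
Qed.

End Basics.
Definition sel (j k : nat) (h : (j <= k)%N) : 'M[int]_(j, k) :=
  \matrix_(i < j) 'e_(widen_ord h i).

Lemma sel_inj (j k : nat) (h : (j <= k)%N) (u : 'rV[int]_j) :
  u *m sel h = 0 -> u = 0.
Proof.
move=> e; apply/rowP => i; have := congr1 (fun M : 'M[int]_(1, k) => M 0 (widen_ord h i)) e.
rewrite !mxE (bigD1 i) //= big1 ?addr0.
  by rewrite !mxE !eqxx /= mulr1 => ->.
move=> i' ne; rewrite !mxE eqxx /=.
have -> : (widen_ord h i == widen_ord h i') = false.
  by apply/negbTE; apply: contra ne => /eqP [] ei; apply/eqP/val_inj.
by rewrite mulr0.
Qed.

Lemma sel_row (j k n : nat) (h : (j <= k)%N) (V : 'M[int]_(k, n)) i :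
  row i (sel h *m V) = row (widen_ord h i) V.
Proof. by rewrite row_mul rowK -rowE. Qed.

Lemma zindep_sel (j k n : nat) (h : (j <= k)%N) (V : 'M[int]_(k, n)) :
  zindep V -> zindep (sel h *m V).
Proof. by move=> hV u; rewrite mulmxA => /hV /sel_inj. Qed.

Section S2.
Variable L : cohom_alg.

Lemma posdef_mono j k : (j <= k)%N -> posdef_k L k -> posdef_k L j.
Proof.
move=> h [V hV]; exists (sel h *m V) => u nz; rewrite mulmxA; apply: hV.
by apply: contra nz => /eqP /sel_inj ->.
Qed.
Lemma negdef_mono j k : (j <= k)%N -> negdef_k L k -> negdef_k L j.
Proof.
move=> h [V hV]; exists (sel h *m V) => u nz; rewrite mulmxA; apply: hV.
by apply: contra nz => /eqP /sel_inj ->.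
Qed.

Lemma rank_le r r' : is_rank_ann1 L r -> is_rank_ann1 L r' -> (r' <= r)%N.
Proof.
move=> [_ hn] [[V [hi ha]] _]; rewrite leqNgt; apply/negP => lt.
apply: hn; exists (sel lt *m V); split; first exact: zindep_sel.
by move=> i y; rewrite sel_row ha.
Qed.
Lemma rank_uniq r r' : is_rank_ann1 L r -> is_rank_ann1 L r' -> r = r'.
Proof. by move=> h h'; apply/eqP; rewrite eqn_leq !(rank_le h h', rank_le h' h). Qed.

Lemma bt1_uniq m m' : is_bt1 L m -> is_bt1 L m' -> m = m'.
Proof. by move=> [r [hr ->]] [r' [hr' ->]]; rewrite (rank_uniq hr hr'). Qed.

Lemma chit_bt1 m t : is_bt1 L m -> is_chit L t -> t = 2 + (b2 L)%:Z - 2 * m%:Z.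
Proof. by move=> hm [m' [hm' ->]]; rewrite (bt1_uniq hm' hm). Qed.

Lemma IT_zero_mul : IT_zero L -> forall x y, @mul11 L x y = 0.
Proof. by move=> hz x y; apply: hz; exists [:: (x, y)]; rewrite big_seq1. Qed.

Lemma chit_IT_zero t : IT_zero L -> is_chit L t -> t = 2 + (b2 L)%:Z.
Proof.
move=> hz [m [[r [hr ->]] ->]].
suff -> : (b1 L - r = 0)%N by rewrite mulr0 subr0.
apply/eqP; rewrite subn_eq0 leqNgt; apply/negP => lt.
case: hr => _; apply; exists (sel lt *m 1%:M); split.
  by apply: zindep_sel => u; rewrite mulmx1.
by move=> i y; rewrite (IT_zero_mul hz).
Qed.

End S2.

Section S3.
Variable L : cohom_alg.
Notation V2 := ('rV[int]_(b2 L)).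
Variables F B : V2.
Hypothesis hB : basis2 F B.

Lemma basis2_swap : basis2 B F.
Proof.
move=> x; have [[a b] [e u]] := hB x.
exists (b, a); split; first by rewrite /= addrC.
by move=> [c d] /= e'; have := u (d, c); rewrite /= addrC => /(_ e') [-> ->].
Qed.

Lemma comb2 (x0 x1 a0 b0 a1 b1 : int) :
  x0 *: (a0 *: F + b0 *: B) + x1 *: (a1 *: F + b1 *: B) =
  (x0 * a0 + x1 * a1) *: F + (x0 * b0 + x1 * b1) *: B.
Proof.
by rewrite !scalerDr !scalerA !scalerDl addrACA.
Qed.

Lemma mul2 (u : 'rV[int]_2) (V : 'M[int]_(2, b2 L)) :
  u *m V = u 0 0 *: row 0 V + u 0 1 *: row 1 V.
Proof.
rewrite mulmx_sum_row !big_ord_recl big_ord0 addr0.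
by congr (_ + _); congr (u 0 _ *: row _ V); apply: val_inj.
Qed.

End S3.

Lemma kill_B (L : cohom_alg) (F B : 'rV[int]_(b2 L)) (V : 'M[int]_(2, b2 L)) :
  basis2 F B -> exists u : 'rV[int]_2, u != 0 /\ exists p, u *m V = p *: F.
Proof.
move=> hB.
have [[a0 b0] [e0 _]] := hB (row 0 V); have [[a1 b1] [e1 _]] := hB (row 1 V).
simpl in e0, e1.
pose x0 : int := if (b0 == 0) && (b1 == 0) then 1 else b1.
pose x1 : int := if (b0 == 0) && (b1 == 0) then 0 else - b0.
exists (\row_(j < 2) if (j : nat) == 0%N then x0 else x1); split.
  apply/eqP => hu.
  have h0 : x0 = 0 by move: (congr1 (fun M : 'M[int]_(1,2) => M 0 0) hu); rewrite !mxE.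
  have h1 : x1 = 0 by move: (congr1 (fun M : 'M[int]_(1,2) => M 0 1) hu); rewrite !mxE.
  move: h0 h1; rewrite /x0 /x1; case: ifP => [_|hn] // h0' /eqP.
  by rewrite oppr_eq0 => /eqP h; rewrite h h0' !eqxx in hn.
exists (x0 * a0 + x1 * a1); rewrite mul2 !mxE /= e0 e1 comb2.
suff -> : x0 * b0 + x1 * b1 = 0 by rewrite scale0r addr0.
rewrite /x0 /x1; case: ifP => [/andP [/eqP e00 /eqP e11]|_]; last ring.
by rewrite e00 e11; ring.
Qed.

Lemma mul1_row (L : cohom_alg) (u : 'rV[int]_1) (V : 'M[int]_(1, b2 L)) :
  u *m V = u 0 0 *: V.
Proof. by rewrite {1}[u]mx11_scalar mul_scalar_mx. Qed.

Lemma nz11 (u : 'rV[int]_1) : u != 0 -> u 0 0 != 0.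
Proof.
apply: contra => /eqP h; apply/eqP; rewrite [u]mx11_scalar h.
by apply/matrixP => i j; rewrite !mxE mul0rn.
Qed.

Lemma def1 (L : cohom_alg) (W : 'rV[int]_(b2 L)) (sgn : int) :
  0 < sgn * dot W W ->
  exists V : 'M[int]_(1, b2 L), forall u : 'rV[int]_1, u != 0 ->
     0 < sgn * dot (u *m V) (u *m V).
Proof.
move=> h; exists W => u /nz11 nz; rewrite mul1_row dotZl dotZr.
move: nz h; set z := u 0 0; set d := dot W W => nz h.
have : 0 < z * z by rewrite lt0r mulf_neq0 //= -expr2 sqr_ge0.
by nia.
Qed.

Section Sig.
Variable L : cohom_alg.
Variables F B : 'rV[int]_(b2 L).
Hypothesis hB : basis2 F B.
Hypothesis hFF : dot F F = 0.
Hypothesis hFB : dot F B = 1.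
Hypothesis hBB : 0 <= dot B B <= 1.

Lemma posdef1 : posdef_k L 1.
Proof.
have h : 0 < 1 * dot (F + B) (F + B).
  move/andP: hBB => [h1 h2].
  rewrite mul1r -[F]scale1r -[B]scale1r dot_coord hFF hFB; lia.
have [V hV] := def1 h.
by exists V => u /hV; rewrite mul1r.
Qed.

Lemma negdef1 : negdef_k L 1.
Proof.
have h : 0 < -1 * dot (F - B) (F - B).
  move/andP: hBB => [h1 h2].
  rewrite -[F]scale1r -[B]scale1r -scaleNr dot_coord hFF hFB; lia.
have [V hV] := def1 h.
by exists V => u /hV; rewrite mulN1r oppr_gt0.
Qed.

Lemma no_posdef2 : ~ posdef_k L 2.
Proof.
move=> [V hV]; have [u [nz [p e]]] := kill_B V hB.
by have := hV u nz; rewrite e dotZl dotZr hFF !mulr0 ltxx.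
Qed.

Lemma no_negdef2 : ~ negdef_k L 2.
Proof.
move=> [V hV]; have [u [nz [p e]]] := kill_B V (basis2_swap hB).
have := hV u nz; rewrite e dotZl dotZr.
have : 0 <= p * p by rewrite -expr2 sqr_ge0.
move/andP: hBB => [h1 h2]; by nia.
Qed.

Lemma sigma0 s : is_sigma L s -> s = 0.
Proof.
move=> [p [q [[hp hp'] [[hq hq'] ->]]]].
have p1 : p = 1%N.
  case: p hp hp' => [|[|p]] // hp hp'; first by have := hp' posdef1.
  by case: no_posdef2; apply: posdef_mono hp.
have q1 : q = 1%N.
  case: q hq hq' => [|[|q]] // hq hq'; first by have := hq' negdef1.
  by case: no_negdef2; apply: negdef_mono hq.
by rewrite p1 q1 subrr.
Qed.

End Sig.

Lemma b2_le2 (L : cohom_alg) (F B : 'rV[int]_(b2 L)) :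
  basis2 F B -> (b2 L <= 2)%N.
Proof.
move=> hB.
pose f := map_mx (fun z : int => (z%:~R : rat)).
pose M : 'M[rat]_(1 + 1, b2 L) := col_mx (f _ _ F) (f _ _ B).
have sub : (1%:M <= M)%MS.
  apply/row_subP => i; rewrite row1.
  have [[a b] [e _]] := hB 'e_i; simpl in e.
  apply/submxP; exists (row_mx (a%:~R)%:M (b%:~R)%:M).
  rewrite mul_row_col !mul_scalar_mx; apply/rowP => j.
  have := congr1 (fun M : 'M[int]_(1, b2 L) => M 0 j) e.
  rewrite !mxE => e'.
  rewrite -!intrM -intrD -e'.
  by case: (_ && _); rewrite ?rmorph1 ?rmorph0.

have := mxrankS sub; rewrite mxrank1 => h.
exact: leq_trans h (rank_leq_row M).
Qed.

Lemma even_sq (x : int) : ((x * x - x) %% 2 = 0)%Z.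
Proof.
have [q [r [e hr]]] : exists q r : int, x = 2 * q + r /\ (r = 0 \/ r = 1)
  by exists (x %/ 2)%Z, (x %% 2)%Z; lia.
by rewrite e; case: hr => ->; nia.
Qed.

Lemma char_basis (L : cohom_alg) (F B c : 'rV[int]_(b2 L)) : basis2 F B ->
  ((dot c F - dot F F) %% 2 = 0)%Z -> ((dot c B - dot B B) %% 2 = 0)%Z ->
  characteristic c.
Proof.
move=> hB h1 h2 A; have [[x y] [-> _]] := hB A; rewrite /= dot_coord.
rewrite (dotC c) dot_lin !(dotC _ c).
move: h1 h2 (even_sq x) (even_sq y).
move: (dot c F) (dot c B) (dot F F) (dot F B) (dot B B) => c' d F' G H h1 h2 h3 h4.
have [k1 e1] : exists k, c' - F' = 2 * k by exists ((c' - F') %/ 2)%Z; lia.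
have [k2 e2] : exists k, d - H = 2 * k by exists ((d - H) %/ 2)%Z; lia.
have [k3 e3] : exists k, x*x - x = 2 * k by exists ((x*x - x) %/ 2)%Z; lia.
have [k4 e4] : exists k, y*y - y = 2 * k by exists ((y*y - y) %/ 2)%Z; lia.
have -> : x * c' + y * d = (x*x*F' + (x*y+y*x)*G + y*y*H) +
   2 * (x * k1 + y * k2 - k3 * F' - k4 * H - x * y * G).
  have -> : c' = F' + 2 * k1 by lia.
  have -> : d = H + 2 * k2 by lia.
  have -> : x * x = x + 2 * k3 by lia.
  have -> : y * y = y + 2 * k4 by lia.
  ring.
lia.
Qed.

Lemma char_par (L : cohom_alg) (c F : 'rV[int]_(b2 L)) :
  characteristic c -> ((dot c F - dot F F) %% 2 = 0)%Z.
Proof. by move=> /(_ F) h; lia. Qed.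

Lemma is_h_of (L : cohom_alg) (A c0 : 'rV[int]_(b2 L)) (k : int) :
  adjunction_class c0 -> A != 0 -> dot A A - `|dot c0 A| = 2 * k ->
  (forall c, adjunction_class c -> `|dot c0 A| <= `|dot c A|) ->
  is_h A (k + 1)%:~R.
Proof.
move=> h0 nz ek hmin; split.
  exists c0; split => //; rewrite /hc (negbTE nz) ek intrM.
  have two : (2%:~R : rat) = 2 by [].
  rewrite intrD two rmorph1; lra.
move=> c /hmin le; rewrite /hc (negbTE nz).
have h : ((dot A A - `|dot c A|)%:~R : rat) <= 2 * k%:~R.
  have two : (2%:~R : rat) = 2 by [].
  rewrite -two -intrM ler_int; lia.
move: h; move: (_%:~R) => X h.
rewrite intrD (_ : (1%:~R : rat) = 1) //; lra.
Qed.

Lemma is_h_0 (L : cohom_alg) (c0 : 'rV[int]_(b2 L)) :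
  adjunction_class c0 -> is_h (0 : 'rV[int]_(b2 L)) 0.
Proof.
by move=> h0; split; [exists c0; split; rewrite // /hc eqxx | move=> c _; rewrite /hc eqxx].
Qed.

Lemma finish (w : int) (P Q : Prop) :
  (w < 0 <-> P) -> (w = 0 <-> Q) ->
  ((w%:~R : rat) < 0 <-> P) /\ ((w%:~R : rat) = 0 <-> Q) /\
  (0 < (w%:~R : rat) <-> ~ P /\ ~ Q).
Proof.
move=> hP hQ; rewrite ltrz0 ltr0z; split => //; split.
  by rewrite -hQ; split => [/eqP|->//]; rewrite intr_eq0 => /eqP.
rewrite -hP -hQ; split; first by move=> h; split; lia.
by case=> h1 h2; lia.
Qed.
Lemma ineq1 (a b g d : int) : 0 <= b -> 0 <= a -> (g %% 2 = 0)%Z -> (d %% 2 = 0)%Z -> 0 < g * d -> 2 * a + 2 * b <= `|g * b + d * a|.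
Proof. move=> hb ha hg hd hgd.
have [hg'|hg'] : 0 < g \/ g <= 0 by lia.
- have hd' : 0 < d by nia.
  have H1 : 2 <= g by lia. have H2 : 2 <= d by lia.
  have H3 : 2 * b <= g * b by nia. have H4 : 2 * a <= d * a by nia. lia.
- have hd' : d < 0 by nia.
  have H5 : g < 0 by nia.
  have H6 : g <= -2 by lia. have H7 : d <= -2 by lia.
  have H8 : g * b <= -2 * b by nia. have H9 : d * a <= -2 * a by nia. lia.
Qed.
Lemma ineq3 (a b g d : int) : 0 <= b -> 0 <= a -> (d %% 2 = 0)%Z -> d != 0 -> 0 <= g * d -> 2 * a <= `|g * b + d * a|.
Proof. move=> hb ha hd /eqP hd0 hgd.
have [hd'|hd'] : 0 < d \/ d < 0 by lia.
- have h2 : 2 <= d by lia. have H10 : 0 <= g by nia. have H11 : 0 <= g * b by nia. have H12 : 2 * a <= d * a by nia. lia.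
- have h2 : d <= -2 by lia. have H13 : g <= 0 by nia. have H14 : g * b <= 0 by nia. have H15 : d * a <= -2 * a by nia. lia.
Qed.
Lemma ineq5 (a b g d : int) : 0 <= a -> (0 <= b \/ b <= - 2 * a) -> (d %% 2 = 0)%Z -> d != 0 -> 0 <= d * (2 * g + d) -> `|2 * a + b| <= `|g * b + d * (a + b)|.
Proof. move=> ha hb hd /eqP hd0 hgd.
have e : 2 * (g * b + d * (a + b)) = b * (2 * g + d) + d * (2 * a + b) by ring.
have [hd'|hd'] : 0 < d \/ d < 0 by lia.
- have h1 : 0 <= 2 * g + d by nia. have h2: 2 <= d by lia. case: hb => hb.
  + have H16 : 0 <= b * (2 * g + d) by nia. have H17 : 2 * (2 * a + b) <= d * (2 * a + b) by nia. nia.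
  + have H18 : b * (2 * g + d) <= 0 by nia. have H19 : d * (2 * a + b) <= 2 * (2 * a + b) by nia. nia.
- have h1 : 2 * g + d <= 0 by nia. have h2: d <= -2 by lia. case: hb => hb.
  + have H20 : b * (2 * g + d) <= 0 by nia. have H21 : d * (2 * a + b) <= -2 * (2 * a + b) by nia. nia.
  + have H22 : 0 <= b * (2 * g + d) by nia. have H23 : -2 * (2 * a + b) <= d * (2 * a + b) by nia. nia.
Qed.
Lemma w1 (a b : int) : 0 <= b -> b <= a -> ~ (a = 0 /\ b = 0) ->
  (a * b - a - b + 1 < 0 <-> (1 < a /\ b = 0)) /\
  (a * b - a - b + 1 = 0 <-> ((1 <= a /\ b = 1) \/ (a = 1 /\ b = 0) \/ (a = 0 /\ b = 0))).
Proof.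
move=> hb hba hn; have e : a * b - a - b + 1 = (a - 1) * (b - 1) by ring.
rewrite e; split; split.
- move=> h; have [hb0|hb1] : b = 0 \/ 1 <= b by lia.
    by subst; lia.
  by nia.
- by case=> h1 ->; lia.
- move=> /eqP; rewrite mulf_eq0 => /orP [/eqP h1|/eqP h1].
  + have [->|->] : b = 0 \/ b = 1 by lia. by right; left; lia. by left; lia.
  + by left; lia.
- move=> h; have [->|->] : a = 1 \/ b = 1 by lia.
    by rewrite subrr mul0r.
  by rewrite subrr mulr0.
Qed.
Lemma w3 (a b : int) : 0 <= b -> 0 <= a -> ~ (a = 0 /\ b = 0) ->
  (a * b - a + 1 < 0 <-> (1 < a /\ b = 0)) /\
  (a * b - a + 1 = 0 <-> ((a = 1 /\ b = 0) \/ (a = 0 /\ b = 0))).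
Proof.
move=> hb ha hn; have [hb0|hb1] : b = 0 \/ 1 <= b by lia.
- subst; rewrite mulr0; split; split; lia.
- have : 0 <= a * (b - 1) by nia.
  split; split; lia.
Qed.
Lemma w5 (a b k : int) : 0 <= a -> (0 <= b \/ b <= - 2 * a) -> (0 < a \/ (a = 0 /\ 0 <= b)) -> ~ (a = 0 /\ b = 0) ->
  2 * a * b + b * b - `|2 * a + b| = 2 * k ->
  (k + 1 < 0 <-> (1 < a /\ b = 0)) /\
  (k + 1 = 0 <-> ((a = 1 /\ b = 0) \/ (a = 0 /\ b = 0))).
Proof.
move=> ha hb hr hn ek.
have [hb0|[hb1|hb2]] : b = 0 \/ 1 <= b \/ b <= -1 by lia.
- subst; move: ek; rewrite !mulr0 addr0; split; split; lia.
- have habs : `|2 * a + b| = 2 * a + b by lia.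
  have e : 2 * k = 2 * a * (b - 1) + b * (b - 1) by rewrite -ek habs; ring.
  have H1 : 0 <= a * (b - 1) by nia.
  have H2 : 0 <= b * (b - 1) by nia.
  split; split; lia.
- have ha' : 0 < a by lia.
  have hb3 : b <= - 2 * a by lia.
  have habs : `|2 * a + b| = - (2 * a + b) by lia.
  have e : 2 * k = (b + 1) * (b + 2 * a) by rewrite -ek habs; ring.
  have H3 : 0 <= (b + 1) * (b + 2 * a) by nia.
  split; split; lia.
Qed.

Lemma dot_linF (L : cohom_alg) (F B : 'rV[int]_(b2 L)) (x y : int) :
  dot (x *: F + y *: B) F = x * dot F F + y * dot F B.
Proof. by rewrite dot_lin (dotC B F). Qed.
Lemma dot_linB (L : cohom_alg) (F B : 'rV[int]_(b2 L)) (x y : int) :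
  dot (x *: F + y *: B) B = x * dot F B + y * dot B B.
Proof. by rewrite dot_lin. Qed.

Lemma case1 (L : cohom_alg) (F B : 'rV[int]_(b2 L)) (a b : int) :
     bplus_one L -> chi_sigma_nonneg L -> IT_zero L ->
     basis2 F B -> dot F F = 0 -> dot B B = 0 -> dot F B = 1 ->
     `|b| <= a ->
     0 <= dot (a *: F + b *: B) (a *: F + b *: B) ->
     exists v, is_h (a *: F + b *: B) v /\
       (v < 0 <-> (1 < a /\ b = 0)) /\
       (v = 0 <-> ((1 <= a /\ b = 1) \/ (a = 1 /\ b = 0) \/ (a = 0 /\ b = 0))) /\
       (0 < v <-> ~ (1 < a /\ b = 0) /\
                  ~ ((1 <= a /\ b = 1) \/ (a = 1 /\ b = 0) \/ (a = 0 /\ b = 0))).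
Proof.
move=> _ [s0 [t0 [hs0 [ht0 _]]]] hz hB hFF hBB hFB hab hAA.
have hBB' : 0 <= dot B B <= 1 by rewrite hBB.
have sig := sigma0 hB hFF hFB hBB'.
pose c0 := 2 *: F + 2 *: B.
have hc0 : adjunction_class c0.
  split.
    by apply: char_basis hB _ _; rewrite ?dot_linF ?dot_linB ?hFF ?hFB ?hBB; lia.
  exists s0, t0; split => //; split => //; left.
  by rewrite (sig _ hs0) dot_coord hFF hFB hBB.
move: hAA; rewrite dot_coord hFF hFB hBB => hAA.
have b0 : 0 <= b by nia.
have a0 : 0 <= a by lia.
case: (boolP ((a == 0) && (b == 0))) => [/andP [/eqP ea /eqP eb] | hn].
  exists ((0 : int)%:~R); subst; rewrite !scale0r addr0; split.
    exact: is_h_0 hc0.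
  by apply: finish; split; lia.
have nz : a *: F + b *: B != 0.
  by apply: contra hn => /eqP /(basis_zero hB) [-> ->]; rewrite !eqxx.
exists ((a * b - a - b) + 1)%:~R; split.
  apply: (is_h_of hc0 nz).
    by rewrite /c0 !dot_coord hFF hFB hBB; nia.
  move=> c [hch [s [t [hs [ht hcond]]]]].
  have [[g d] [ec _]] := hB c; simpl in ec; subst c.
  have pg := char_par B hch; have pd := char_par F hch.
  rewrite dot_linF dot_linB hFF hFB hBB in pg pd.
  rewrite (sig _ hs) (chit_IT_zero hz ht) dot_coord hFF hFB hBB in hcond.
  have hgd : 0 < g * d by case: hcond; lia.
  have := ineq1 b0 a0 (_ : (g %% 2 = 0)%Z) (_ : (d %% 2 = 0)%Z) hgd.
  by rewrite /c0 !dot_coord hFF hFB hBB => /(_ ltac:(lia) ltac:(lia)); lia.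
have hn' : ~ (a = 0 /\ b = 0) by move=> [ea eb]; move: hn; rewrite ea eb !eqxx.
have hba : b <= a by lia.
have [h1 h2] := w1 b0 hba hn'.
exact: finish h1 h2.
Qed.

Lemma adj35 (L : cohom_alg) (F B : 'rV[int]_(b2 L)) :
  chi_sigma_nonneg L -> is_bt1 L 2 ->
  (forall x, in_IT x <-> exists n : int, x = n *: F) ->
  basis2 F B -> dot F F = 0 -> dot F B = 1 -> 0 <= dot B B <= 1 ->
  (forall c, adjunction_class c ->
     characteristic c /\ 0 <= dot c c /\ dot c F != 0) /\
  (forall c, characteristic c -> 0 <= dot c c -> dot c F != 0 ->
     adjunction_class c).
Proof.
move=> [s0 [t0 [hs0 [ht0 hst]]]] hbt hIT hB hFF hFB hBB.
have sig := sigma0 hB hFF hFB hBB.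
have le2 := b2_le2 hB.
have tz : forall t, is_chit L t -> t = 0.
  move=> t ht; rewrite (chit_bt1 hbt ht).
  move: hst; rewrite (sig _ hs0) (chit_bt1 hbt ht0); lia.
have Fnz : F != 0.
  apply/eqP => e; have := @basis_zero L F B 1 0 hB.
  by rewrite scale1r scale0r addr0 => /(_ e) [/eqP]; rewrite oner_eq0.
have ITnz : IT_nonzero L.
  by exists F; split => //; apply/hIT; exists 1; rewrite scale1r.
split.
  move=> c [hch [s [t [hs [ht hcond]]]]]; split => //.
  rewrite (sig _ hs) (tz _ ht) in hcond.
  case: hcond => [h|[h1 h2]].
    split; first lia.
    apply/eqP => e; have [[g d] [ec _]] := hB c; simpl in ec.
    move: h; rewrite ec dot_coord hFF hFB.
    move: e; rewrite ec dot_linF hFF hFB => e.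
    have -> : d = 0 by lia.
    by rewrite !mulr0 !mul0r !addr0 ltxx.
  split; first lia.
  have [x [/hIT [n ->] hx]] := h2 ITnz.
  by apply: contra hx => /eqP e; rewrite dotZr e mulr0.
move=> c hch hcc hcF; split => //; exists s0, t0; split => //; split => //.
right; split; first by rewrite (sig _ hs0) (tz _ ht0).
by move=> _; exists F; split => //; apply/hIT; exists 1; rewrite scale1r.
Qed.

Lemma case3 (L : cohom_alg) (F B : 'rV[int]_(b2 L)) (a b : int) :
     bplus_one L -> chi_sigma_nonneg L -> is_bt1 L 2 ->
     (forall x, in_IT x <-> exists n : int, x = n *: F) ->
     basis2 F B -> dot F F = 0 -> dot B B = 0 -> dot F B = 1 ->
     (0 < a \/ (a = 0 /\ 0 <= b)) ->
     0 <= dot (a *: F + b *: B) (a *: F + b *: B) ->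
     exists v, is_h (a *: F + b *: B) v /\
       (v < 0 <-> (1 < a /\ b = 0)) /\
       (v = 0 <-> ((a = 1 /\ b = 0) \/ (a = 0 /\ b = 0))) /\
       (0 < v <-> ~ (1 < a /\ b = 0) /\ ~ ((a = 1 /\ b = 0) \/ (a = 0 /\ b = 0))).
Proof.
move=> _ hcs hbt hIT hB hFF hBB hFB hred hAA.
have hBB' : 0 <= dot B B <= 1 by rewrite hBB.
have [adj1 adj2] := adj35 hcs hbt hIT hB hFF hFB hBB'.
pose c0 := 0 *: F + 2 *: B.
have hc0 : adjunction_class c0.
  apply: adj2.
  - by apply: char_basis hB _ _; rewrite ?dot_linF ?dot_linB ?hFF ?hFB ?hBB; lia.
  - by rewrite /c0 dot_coord hFF hFB hBB.
  - by rewrite /c0 dot_linF hFF hFB.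
move: hAA; rewrite dot_coord hFF hFB hBB => hAA.
have a0 : 0 <= a by lia.
have b0 : 0 <= b by nia.
case: (boolP ((a == 0) && (b == 0))) => [/andP [/eqP ea /eqP eb] | hn].
  exists ((0 : int)%:~R); subst; rewrite !scale0r addr0; split.
    exact: is_h_0 hc0.
  by apply: finish; split; lia.
have nz : a *: F + b *: B != 0.
  by apply: contra hn => /eqP /(basis_zero hB) [-> ->]; rewrite !eqxx.
exists ((a * b - a) + 1)%:~R; split.
  apply: (is_h_of hc0 nz).
    by rewrite /c0 !dot_coord hFF hFB hBB; nia.
  move=> c /adj1 [hch [hcc hcF]].
  have [[g d] [ec _]] := hB c; simpl in ec; subst c.
  have pd := char_par F hch.
  rewrite dot_linF hFF hFB in pd hcF.
  rewrite dot_coord hFF hFB hBB in hcc.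
  have hd : d != 0 by move: hcF; rewrite mulr0 add0r mulr1.
  have hgd : 0 <= g * d by lia.
  have := ineq3 b0 a0 (_ : (d %% 2 = 0)%Z) hd hgd.
  by rewrite /c0 !dot_coord hFF hFB hBB => /(_ ltac:(lia)); lia.
have hn' : ~ (a = 0 /\ b = 0) by move=> [ea eb]; move: hn; rewrite ea eb !eqxx.
have [h1 h2] := w3 b0 a0 hn'.
exact: finish h1 h2.
Qed.

Lemma case5 (L : cohom_alg) (F B : 'rV[int]_(b2 L)) (a b : int) :
     bplus_one L -> chi_sigma_nonneg L -> is_bt1 L 2 ->
     (forall x, in_IT x <-> exists n : int, x = n *: F) ->
     basis2 F B -> dot F F = 0 -> dot F B = 1 -> dot B B = 1 ->
     (0 < a \/ (a = 0 /\ 0 <= b)) ->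
     0 <= dot (a *: F + b *: B) (a *: F + b *: B) ->
     exists v, is_h (a *: F + b *: B) v /\
       (v < 0 <-> (1 < a /\ b = 0)) /\
       (v = 0 <-> ((a = 1 /\ b = 0) \/ (a = 0 /\ b = 0))) /\
       (0 < v <-> ~ (1 < a /\ b = 0) /\ ~ ((a = 1 /\ b = 0) \/ (a = 0 /\ b = 0))).
Proof.
move=> _ hcs hbt hIT hB hFF hFB hBB hred hAA.
have hBB' : 0 <= dot B B <= 1 by rewrite hBB.
have [adj1 adj2] := adj35 hcs hbt hIT hB hFF hFB hBB'.
pose c0 := (-1) *: F + 2 *: B.
have hc0 : adjunction_class c0.
  apply: adj2.
  - by apply: char_basis hB _ _; rewrite ?dot_linF ?dot_linB ?hFF ?hFB ?hBB; lia.
  - by rewrite /c0 dot_coord hFF hFB hBB.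
  - by rewrite /c0 dot_linF hFF hFB.
move: hAA; rewrite dot_coord hFF hFB hBB => hAA.
have a0 : 0 <= a by lia.
have hb : 0 <= b \/ b <= - 2 * a by nia.
case: (boolP ((a == 0) && (b == 0))) => [/andP [/eqP ea /eqP eb] | hn].
  exists ((0 : int)%:~R); subst; rewrite !scale0r addr0; split.
    exact: is_h_0 hc0.
  by apply: finish; split; lia.
have nz : a *: F + b *: B != 0.
  by apply: contra hn => /eqP /(basis_zero hB) [-> ->]; rewrite !eqxx.
pose k := ((2 * a * b + b * b - `|2 * a + b|) %/ 2)%Z.
have ek : 2 * a * b + b * b - `|2 * a + b| = 2 * k.
  have := even_sq b; rewrite /k; lia.
exists (k + 1)%:~R; split.
  apply: (is_h_of hc0 nz).
    by rewrite /c0 !dot_coord hFF hFB hBB; nia.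
  move=> c /adj1 [hch [hcc hcF]].
  have [[g d] [ec _]] := hB c; simpl in ec; subst c.
  have pd := char_par F hch.
  rewrite dot_linF hFF hFB in pd hcF.
  rewrite dot_coord hFF hFB hBB in hcc.
  have hd : d != 0 by move: hcF; rewrite mulr0 add0r mulr1.
  have hgd : 0 <= d * (2 * g + d) by nia.
  have := ineq5 a0 hb (_ : (d %% 2 = 0)%Z) hd hgd.
  by rewrite /c0 !dot_coord hFF hFB hBB => /(_ ltac:(lia)) h; nia.
have hn' : ~ (a = 0 /\ b = 0) by move=> [ea eb]; move: hn; rewrite ea eb !eqxx.
have [h1 h2] := w5 a0 hb hred hn' ek.
exact: finish h1 h2.
Qed.

Lemma UmE8_diag (i : 'I_10) : ((UmE8 i i) %% 2 = 0)%Z.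
Proof.
rewrite /UmE8 mxE eqxx /E8entry eqxx.
by case: ifP => _; [|case: ifP => _].
Qed.

Lemma case2 (L : cohom_alg) :
     bplus_one L -> chi_sigma_nonneg L -> IT_zero L ->
     (exists V : 'M[int]_(10, b2 L),
        (forall x, exists! u : 'rV[int]_10, x = u *m V) /\
        (forall i j, dot (row i V) (row j V) = UmE8 i j)) ->
     forall A : 'rV[int]_(b2 L), A != 0 -> 0 <= dot A A ->
     exists v, is_h A v /\ 0 < v.
Proof.
move=> [_ hnp] [s0 [t0 [hs0 [ht0 _]]]] _ [V [hVb hVg]] A nz hAA.
have [p [q [hbp' [hbm' es]]]] := hs0.
have [hp _] := hbp'; have [_ hq] := hbm'.
pose i2 := @Ordinal 10 2 isT.
pose i3 := @Ordinal 10 3 isT.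
have nd2 : negdef_k L 2.
  exists (\matrix_(i < 2) row (if (i : nat) == 0%N then i2 else i3) V) => u nzu.
  rewrite mul2 !rowK /= dot_coord !hVg.
  have -> : UmE8 i2 i2 = -2 by rewrite mxE.
  have -> : UmE8 i2 i3 = 1 by rewrite mxE.
  have -> : UmE8 i3 i3 = -2 by rewrite mxE.
  have : u 0 0 != 0 \/ u 0 1 != 0.
    case: (boolP (u 0 0 == 0)) => [/eqP h0|]; last by left.
    case: (boolP (u 0 1 == 0)) => [/eqP h1|]; last by right.
    case/negP: nzu; apply/eqP/rowP => j; rewrite mxE.
    by case: j => -[|[|//]] hj; [rewrite -h0 | rewrite -h1]; congr (u 0 _); apply: val_inj.
  move: (u 0 0) (u 0 1) => x y; case=> /eqP h; nia.
have p1 : (p <= 1)%N.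
  by rewrite leqNgt; apply/negP => lt; apply: hnp; exact: posdef_mono lt hp.
have q2 : (2 <= q)%N.
  by rewrite leqNgt; apply/negP => lt; apply: hq; exact: negdef_mono lt nd2.
have s0neg : s0 < 0 by rewrite es; lia.
have ev : forall A' : 'rV[int]_(b2 L), ((dot A' A') %% 2 = 0)%Z.
  move=> A'; have [u [-> _]] := hVb A'; rewrite mulmx_sum_row.
  apply: (big_ind (fun x => ((dot x x) %% 2 = 0)%Z)).
  - by rewrite dot0l.
  - move=> x y hx hy; rewrite -dotDl -!dotDr (dotC y x).
    have [k1 e1] : exists k, dot x x = 2 * k by exists ((dot x x) %/ 2)%Z; lia.
    have [k2 e2] : exists k, dot y y = 2 * k by exists ((dot y y) %/ 2)%Z; lia.
    rewrite e1 e2; lia.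
  - move=> i _; rewrite dotZl dotZr hVg.
    have := UmE8_diag i.
    move: (UmE8 i i) (u 0 i) => g z hg.
    have [k e] : exists k, g = 2 * k by exists (g %/ 2)%Z; lia.
    by rewrite e; lia.
have hc0 : adjunction_class (0 : 'rV[int]_(b2 L)).
  split.
    by move=> B; rewrite dot0l; have := ev B; lia.
  exists s0, t0; split => //.
  by split => //; left; rewrite dot0l.
exists (hc 0 A); split.
  split; first by exists 0.
  move=> c _; rewrite /hc (negbTE nz) dot0l normr0 subr0.
  have : ((dot A A - `|dot c A|)%:~R : rat) <= (dot A A)%:~R.
    by rewrite ler_int; lia.
  move: (_%:~R) (_%:~R) => X Y h; lra.
rewrite /hc (negbTE nz) dot0l normr0 subr0.
have : (0 : rat) <= (dot A A)%:~R by rewrite ler0z.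
move: (_%:~R) => X h; lra.
Qed.

Theorem mainTheorem10 :
  (* Case (1) *)
  (forall (L : cohom_alg) (F B : 'rV[int]_(b2 L)) (a b : int),
     bplus_one L -> chi_sigma_nonneg L -> IT_zero L ->
     basis2 F B -> dot F F = 0 -> dot B B = 0 -> dot F B = 1 ->
     `|b| <= a ->
     0 <= dot (a *: F + b *: B) (a *: F + b *: B) ->
     exists v, is_h (a *: F + b *: B) v /\
       (v < 0 <-> (1 < a /\ b = 0)) /\
       (v = 0 <-> ((1 <= a /\ b = 1) \/ (a = 1 /\ b = 0) \/ (a = 0 /\ b = 0))) /\
       (0 < v <-> ~ (1 < a /\ b = 0) /\
                  ~ ((1 <= a /\ b = 1) \/ (a = 1 /\ b = 0) \/ (a = 0 /\ b = 0))))
  /\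
  (* Case (2) *)
  (forall (L : cohom_alg),
     bplus_one L -> chi_sigma_nonneg L -> IT_zero L ->
     (exists V : 'M[int]_(10, b2 L),
        (forall x, exists! u : 'rV[int]_10, x = u *m V) /\
        (forall i j, dot (row i V) (row j V) = UmE8 i j)) ->
     forall A : 'rV[int]_(b2 L), A != 0 -> 0 <= dot A A ->
     exists v, is_h A v /\ 0 < v)
  /\
  (* Case (3) *)
  (forall (L : cohom_alg) (F B : 'rV[int]_(b2 L)) (a b : int),
     bplus_one L -> chi_sigma_nonneg L -> is_bt1 L 2 ->
     (forall x, in_IT x <-> exists n : int, x = n *: F) ->
     basis2 F B -> dot F F = 0 -> dot B B = 0 -> dot F B = 1 ->
     (0 < a \/ (a = 0 /\ 0 <= b)) ->
     0 <= dot (a *: F + b *: B) (a *: F + b *: B) ->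
     exists v, is_h (a *: F + b *: B) v /\
       (v < 0 <-> (1 < a /\ b = 0)) /\
       (v = 0 <-> ((a = 1 /\ b = 0) \/ (a = 0 /\ b = 0))) /\
       (0 < v <-> ~ (1 < a /\ b = 0) /\ ~ ((a = 1 /\ b = 0) \/ (a = 0 /\ b = 0))))
  /\
  (* Case (5) *)
  (forall (L : cohom_alg) (F B : 'rV[int]_(b2 L)) (a b : int),
     bplus_one L -> chi_sigma_nonneg L -> is_bt1 L 2 ->
     (forall x, in_IT x <-> exists n : int, x = n *: F) ->
     basis2 F B -> dot F F = 0 -> dot F B = 1 -> dot B B = 1 ->
     (0 < a \/ (a = 0 /\ 0 <= b)) ->
     0 <= dot (a *: F + b *: B) (a *: F + b *: B) ->
     exists v, is_h (a *: F + b *: B) v /\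
       (v < 0 <-> (1 < a /\ b = 0)) /\
       (v = 0 <-> ((a = 1 /\ b = 0) \/ (a = 0 /\ b = 0))) /\
       (0 < v <-> ~ (1 < a /\ b = 0) /\ ~ ((a = 1 /\ b = 0) \/ (a = 0 /\ b = 0)))).
Proof.
split; first exact: case1.
split; first exact: case2.
split; first exact: case3.
exact: case5.
Qed.
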